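(* If $G\in\mathcal{G}_{\mathrm{plin}}$, then for some alphabet $\Sigma$ there is an embedding of $G$ into $\llbracket\Sigma^{\mathbb{Z}}\rrbracket$ whose image has linear plook-ahead and in which the cocycle of every group element takes only even values.
   Context: An alphabet is a finite set with at least two elements. $\llbracket\Sigma^{\mathbb{Z}}\rrbracket$ is the group of homeomorphisms $f$ of $\Sigma^{\mathbb{Z}}$ with a continuous cocycle $c:\Sigma^{\mathbb{Z}}\to\mathbb{Z}$ such that $f(x)=\sigma^{c(x)}(x)$, where $\sigma(x)_i=x_{i+1}$. A subgroup $G\le\llbracket\Sigma^{\mathbb{Z}}\rrbracket$ has plook-ahead $\alpha:\mathbb{N}\to\mathbb{N}$ if $\alpha(0)=0$ and for every non-identity $g\in G$ with cocycle $c$ there are $n\ge1$ and a point $x$ with $\sigma^p(x)=x$ for some $1\le p\le 2n+1$ and $|c(x)|+\alpha(|c(x)|)\ge n$. $\alpha$ is linear if $\alpha(n)\le Cn+C$ for some $C\in\mathbb{N}$ and all $n$. $\mathcal{G}_{\mathrm{plin}}$ is the class of groups isomorphic to a subgroup of $\llbracket\Sigma^{\mathbb{Z}}\rrbracket$, for some alphabet $\Sigma$, having linear plook-ahead. *)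

(* Defs.v *)
From mathcomp Require Import all_boot all_order all_algebra.
Set Implicit Arguments. Unset Strict Implicit. Unset Printing Implicit Defensive.
Import Order.TTheory GRing.Theory Num.Theory.
Local Open Scope ring_scope.

Definition alphabet (S : finType) : Prop := (1 < #|S|)%N.

Definition conf (S : finType) := int -> S.

(* sigma^k (x)_i = x_{i+k}, for k : int; sigma = shiftk 1. *)
Definition shiftk (S : finType) (k : int) (x : conf S) : conf S :=
  fun i => x (i + k).

Definition agree (S : finType) (n : nat) (x y : conf S) : Prop :=
  forall i : int, (`|i|%N <= n)%N -> x i = y i.

Definition cont_map (S : finType) (f : conf S -> conf S) : Prop :=
  forall x (m : nat), exists n : nat, forall y, agree n x y -> agree m (f x) (f y).

Definition cont_int (S : finType) (c : conf S -> int) : Prop :=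
  forall x, exists n : nat, forall y, agree n x y -> c y = c x.

Definition homeo (S : finType) (f : conf S -> conf S) : Prop :=
  cont_map f /\ exists g : conf S -> conf S,
    cont_map g /\ (forall x, g (f x) = x) /\ (forall x, f (g x) = x).

Definition cocycle_of (S : finType) (f : conf S -> conf S) (c : conf S -> int) : Prop :=
  cont_int c /\ forall x, f x = shiftk (c x) x.

Definition in_TFG (S : finType) (f : conf S -> conf S) : Prop :=
  homeo f /\ exists c, cocycle_of f c.

Definition has_plookahead (S : finType) (G : Type) (phi : G -> conf S -> conf S)
    (alpha : nat -> nat) : Prop :=
  alpha 0%N = 0%N /\
  forall g : G, phi g <> id -> forall c, cocycle_of (phi g) c ->
    exists n : nat, (1 <= n)%N /\
      exists (x : conf S) (p : nat), (1 <= p <= n.*2.+1)%N /\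
        (forall i, shiftk (Posz p) x i = x i) /\
        (n <= `|c x|%N + alpha `|c x|%N)%N.

Definition linear_fun (alpha : nat -> nat) : Prop :=
  exists C : nat, forall n : nat, (alpha n <= C * n + C)%N.

Definition embedding (G : Type) (mul : G -> G -> G) (S : finType)
    (phi : G -> conf S -> conf S) : Prop :=
  (forall g, in_TFG (phi g)) /\
  (forall g h, phi (mul g h) = phi g \o phi h) /\
  (forall g h, phi g = phi h -> g = h).

Definition is_group (G : Type) (mul : G -> G -> G) (one : G) (inv : G -> G) : Prop :=
  (forall a b c, mul a (mul b c) = mul (mul a b) c) /\
  (forall a, mul one a = a) /\ (forall a, mul (inv a) a = one).

Definition in_Gplin (G : Type) (mul : G -> G -> G) : Prop :=
  exists (S : finType) (phi : G -> conf S -> conf S) (alpha : nat -> nat),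
    alphabet S /\ embedding mul phi /\ has_plookahead phi alpha /\ linear_fun alpha.

(* Main.v *)
Require Import Defs.
From mathcomp Require Import all_boot all_order all_algebra.
From mathcomp Require Import zify ring.
From Stdlib Require Import FunctionalExtensionality ClassicalEpsilon.
Set Implicit Arguments. Unset Strict Implicit. Unset Printing Implicit Defensive.
Import Order.TTheory GRing.Theory Num.Theory.
Local Open Scope ring_scope.

Section Aux.
Variable S : finType.

Definition mk (a b : S) (n : nat) (x : conf S) : conf S := fun i =>
  if (absz i <= n)%N then x i else if i < 0 then a else b.

Lemma mk_agree a b n x : agree n x (mk a b n x).
Proof. by move=> i Hi; rewrite /mk Hi. Qed.

Lemma agree_le m n (x y : conf S) : (m <= n)%N -> agree n x y -> agree m x y.
Proof. move=> Hmn H i Hi; apply: H; lia. Qed.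

Lemma shiftk_add k l (x : conf S) : shiftk k (shiftk l x) = shiftk (k + l) x.
Proof. by apply: functional_extensionality => i; rewrite /shiftk addrA. Qed.

Lemma shiftk0 (x : conf S) : shiftk 0 x = x.
Proof. by apply: functional_extensionality => i; rewrite /shiftk addr0. Qed.

Lemma mk_aper a b n x k l : a != b ->
  shiftk k (mk a b n x) = shiftk l (mk a b n x) -> k = l.
Proof.
move=> ab H; set y := mk a b n x in H *.
have H1 : forall j, y (j + (k - l)) = y j.
  move=> j; have := congr1 (fun f => f (j - l)) H; rewrite /shiftk.
  have -> : j - l + k = j + (k - l) by ring.
  by have -> : j - l + l = j by ring.
have H2 : forall (m : nat) j, y (j + m%:Z * (k - l)) = y j.
  elim=> [|m IH] j; first by rewrite mul0r addr0.
  by rewrite -addn1 PoszD mulrDl mul1r addrA H1 IH.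
case: (ltgtP k l) => // Hkl.
- have := H2 (n.*2.+2) ((n.+1)%:Z); rewrite /y /mk.
  have -> : (absz (Posz n.+1 + Posz n.*2.+2 * (k - l))%R <= n)%N = false by nia.
  have -> : (absz (Posz n.+1) <= n)%N = false by lia.
  have -> : (Posz n.+1 + Posz n.*2.+2 * (k - l) < 0) = true by nia.
  have -> : ((n.+1)%:Z < 0) = false by lia.
  by move=> E; move: ab; rewrite E eqxx.
- have := H2 (n.*2.+2) (- ((n.+1)%:Z)); rewrite /y /mk.
  have -> : (absz (- Posz n.+1 + Posz n.*2.+2 * (k - l))%R <= n)%N = false by nia.
  have -> : (absz (- Posz n.+1)%R <= n)%N = false by lia.
  have -> : (- Posz n.+1 + Posz n.*2.+2 * (k - l) < 0) = false by nia.
  have -> : (- (n.+1)%:Z < 0) = true by lia.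
  by move=> E; move: ab; rewrite E eqxx.
Qed.

Lemma cocycle_uniq (a b : S) (f : conf S -> conf S) c1 c2 : a != b ->
  cocycle_of f c1 -> cocycle_of f c2 -> c1 = c2.
Proof.
move=> ab [C1 E1] [C2 E2]; apply: functional_extensionality => x.
have [n1 N1] := C1 x; have [n2 N2] := C2 x.
set y := mk a b (maxn n1 n2) x.
have Ay : agree (maxn n1 n2) x y by apply: mk_agree.
rewrite -(N1 y); last exact: agree_le (leq_maxl _ _) Ay.
rewrite -(N2 y); last exact: agree_le (leq_maxr _ _) Ay.
have := E1 y; rewrite E2 => /esym; exact: mk_aper.
Qed.

Definition ev (x : conf S) : conf S := fun i => x (2 * i).
Definition unev (z : conf S) : conf S := fun i => z (i %/ 2)%Z.

Lemma ev_shift k (x : conf S) : ev (shiftk (2 * k) x) = shiftk k (ev x).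
Proof. by apply: functional_extensionality => i; rewrite /ev /shiftk mulrDr. Qed.

Lemma ev_unev z : ev (unev z) = z.
Proof. by apply: functional_extensionality => i; rewrite /ev /unev mulrC mulzK. Qed.

Lemma agree_ev n (x y : conf S) : agree n.*2 x y -> agree n (ev x) (ev y).
Proof. move=> H i Hi; rewrite /ev; apply: H; lia. Qed.

Lemma cont_int_ev (c : conf S -> int) : cont_int c -> cont_int (fun x => 2 * c (ev x)).
Proof.
move=> Hc x; have [n Hn] := Hc (ev x); exists n.*2 => y Hy.
by rewrite Hn //; apply: agree_ev.
Qed.

Lemma cont_map_shift (c : conf S -> int) : cont_int c -> cont_map (fun x => shiftk (c x) x).
Proof.
move=> Hc x m; have [n Hn] := Hc x.
exists (maxn n (m + absz (c x))) => y Hy.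
rewrite Hn; last exact: agree_le (leq_maxl _ _) Hy.
move=> i Hi; rewrite /shiftk.
apply: Hy; have := leq_maxr n (m + absz (c x)); lia.
Qed.

End Aux.

Lemma group_rinv (G : Type) (mul : G -> G -> G) (one : G) (inv : G -> G) :
  is_group mul one inv -> forall a, mul a (inv a) = one.
Proof.
move=> [A [L I]] a; set b := inv a.
have E : mul b (mul a b) = b by rewrite A I L.
have := congr1 (mul (inv b)) E; rewrite I A I L => ->. done.
Qed.

Local Close Scope ring_scope.

Theorem mainTheorem5 (G : Type) (mul : G -> G -> G) (one : G) (inv : G -> G) :
  is_group mul one inv ->
  in_Gplin mul ->
  exists (S : finType) (phi : G -> conf S -> conf S) (alpha : nat -> nat),
    alphabet S /\ embedding mul phi /\ has_plookahead phi alpha /\ linear_fun alpha /\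
    (forall (g : G) (c : conf S -> int), cocycle_of (phi g) c ->
       forall x : conf S, (2 %| c x)%Z).
Proof.
move=> Hgrp [S [phi [alpha [alph [[tfg [hom inj]] [[a0 pla] [C lin]]]]]]].
have [a [b [_ _ ab]]] := card_gt1P alph.
have cc : forall g, {c | cocycle_of (phi g) c} :=
  fun g => constructive_indefinite_description _ (proj2 (tfg g)).
pose cg g := proj1_sig (cc g).
have cgP : forall g, cocycle_of (phi g) (cg g) := fun g => proj2_sig (cc g).
pose phi' g (x : conf S) := shiftk (2 * cg g (ev x))%R x.
have cg'P : forall g, cocycle_of (phi' g) (fun x => 2 * cg g (ev x))%R.
  by move=> g; split => //; apply: cont_int_ev; case: (cgP g).
have cgM : forall g h z, cg (mul g h) z = (cg g (phi h z) + cg h z)%R.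
  move=> g h z.
  suff -> : cg (mul g h) = (fun z => cg g (phi h z) + cg h z)%R by [].
  apply: (cocycle_uniq ab (cgP _)); split.
  - move=> y; have [n1 N1] := (proj1 (cgP h)) y.
    have [n2 N2] := (proj1 (cgP g)) (phi h y).
    have [n3 N3] := (proj1 (proj1 (tfg h))) y n2.
    exists (maxn n1 n3) => w Hw.
    rewrite N1; last exact: agree_le (leq_maxl _ _) Hw.
    rewrite N2 //; apply: N3.
    exact: (agree_le (leq_maxr _ _) Hw).
  - move=> y; rewrite hom /= (proj2 (cgP g) (phi h y)).
    by rewrite {2}(proj2 (cgP h) y) shiftk_add.
have phi1 : phi one = id.
  apply: functional_extensionality => x.
  have [_ [gi [_ [gf _]]]] := proj1 (tfg one).
  have E : phi one (phi one x) = phi one x.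
    by have := congr1 (fun f => f x) (hom one one); rewrite (proj1 (proj2 Hgrp)).
  by rewrite -{2}(gf x) -E gf.
have cg1 : cg one = fun _ => 0%R.
  apply: (cocycle_uniq ab (cgP one)); split; first by move=> x; exists 0%N.
  by move=> x; rewrite phi1 shiftk0.
have phi'1 : phi' one = id.
  by apply: functional_extensionality => x; rewrite /phi' cg1 mulr0 shiftk0.
have hom' : forall g h, phi' (mul g h) = phi' g \o phi' h.
  move=> g h; apply: functional_extensionality => x; rewrite /= /phi' ev_shift.
  rewrite -(proj2 (cgP h) (ev x)) shiftk_add cgM; congr (shiftk _ x); ring.
have cg'U : forall g c, cocycle_of (phi' g) c -> c = (fun x => 2 * cg g (ev x))%R.
  by move=> g c Hc; apply: (cocycle_uniq ab Hc (cg'P g)).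
exists S, phi'.
exists (fun m => if m == 0%N then 0%N else (alpha m./2).*2.+1).
split => //; split; [split; [|split] | split; [split|split]].
- move=> g; split; last by exists (fun x => 2 * cg g (ev x))%R.
  split; first by apply: cont_map_shift; apply: cont_int_ev; case: (cgP g).
  exists (phi' (inv g)); split.
    by apply: cont_map_shift; apply: cont_int_ev; case: (cgP (inv g)).
  split => x.
  + by have := congr1 (fun f => f x) (hom' (inv g) g);
      rewrite (proj2 (proj2 Hgrp)) phi'1 /= => E; rewrite -E.
  + by have := congr1 (fun f => f x) (hom' g (inv g));
      rewrite (group_rinv Hgrp) phi'1 /= => E; rewrite -E.
- exact: hom'.
- move=> g h E; apply: inj.
  have Hg := cg'P g; rewrite E in Hg; have H := cg'U h _ Hg.
  apply: functional_extensionality => z.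
  have := congr1 (fun f => f (unev z)) H; rewrite /= ev_unev => Hz.
  have Hz' : cg g z = cg h z by lia.
  by rewrite (proj2 (cgP g) z) (proj2 (cgP h) z) Hz'.
- by [].
- move=> g Hne c Hc; rewrite (cg'U g c Hc).
  have Hne' : phi g <> id.
    move=> E; apply: Hne; have E0 : cg g = fun _ => 0%R.
      apply: (cocycle_uniq ab (cgP g)); split; first by move=> x; exists 0%N.
      by move=> x; rewrite E shiftk0.
    by apply: functional_extensionality => x; rewrite /phi' E0 mulr0 shiftk0.
  have [n [n1 [z [p [Hp [Hper Hn]]]]]] := pla g Hne' (cg g) (cgP g).
  exists n.*2.+1; split => //.
  exists (unev z), p.*2; split; first lia.
  split.
    move=> i; rewrite /shiftk /unev.
    have -> : Posz p.*2 = (Posz p * 2)%R by rewrite -muln2 PoszM.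
    rewrite divzDr ?mulzK //; last exact: dvdz_mull (dvdzz 2).
    exact: (Hper (i %/ 2)%Z).
  rewrite ev_unev abszM.
  have k0 : absz (cg g z) != 0%N.
    apply/negP => /eqP E; move: Hn; rewrite E a0; lia.
  have -> : (absz 2 * absz (cg g z) == 0)%N = false by lia.
  have -> : (absz 2 * absz (cg g z))./2 = absz (cg g z).
    by rewrite [absz 2]/= mul2n half_double.
  lia.
- exists (C.*2.+1) => m; case: eqP => // /eqP m0.
  have h : (m./2 <= m)%N by rewrite -{2}(odd_double_half m); lia.
  have := lin m./2; nia.
- move=> g c Hc x; rewrite (cg'U g c Hc); exact: dvdz_mulr.
Qed.
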